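(* Let $(\mathcal V,\le,\otimes,\mathbb 1)$ be a non-trivial epistemic calculus which is complete. Then $\mathcal V$ cannot simultaneously be closed, strongly epistemically conservative, and cancellative.
   Context: An epistemic calculus is a symmetric monoidal posetal category $(\mathcal V,\le,\otimes,\mathbb 1)$: a partially ordered set $(\mathcal V,\le)$ together with a binary operation $\otimes$ that is associative, commutative, has unit $\mathbb 1$ (i.e. $\mathbb 1\otimes x = x$ for all $x$), and is monotone ($x\le x'$ and $y\le y'$ imply $x\otimes y\le x'\otimes y'$). It is non-trivial if it has at least two distinct elements. It is complete if every subset $S\subseteq\mathcal V$ has a least upper bound (join) $\bigvee S$. It is closed if there is a binary operation $[-,-]$ on $\mathcal V$ (the internal hom) such that for all $x,y,z$: $x\otimes y\le z \iff x\le [y,z]$. It is strongly epistemically conservative if $x\le x\otimes y$ for all $x,y\in\mathcal V$. It is cancellative if for all $x,y,z$, $x\otimes z\le y\otimes z$ implies $x\le y$. *)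

(* Defs.v *)
Record epistemic_calculus (V : Type) (le : V -> V -> Prop)
    (tensor : V -> V -> V) (one : V) : Prop := {
  ec_refl : forall x, le x x;
  ec_trans : forall x y z, le x y -> le y z -> le x z;
  ec_antisym : forall x y, le x y -> le y x -> x = y;
  ec_assoc : forall x y z, tensor x (tensor y z) = tensor (tensor x y) z;
  ec_comm : forall x y, tensor x y = tensor y x;
  ec_unit : forall x, tensor one x = x;
  ec_mono : forall x x' y y', le x x' -> le y y' ->
              le (tensor x y) (tensor x' y')
}.

Definition nontrivial (V : Type) : Prop := exists x y : V, x <> y.

Definition is_join {V : Type} (le : V -> V -> Prop) (S : V -> Prop) (s : V) : Prop :=
  (forall x, S x -> le x s) /\ (forall u, (forall x, S x -> le x u) -> le s u).

Definition complete {V : Type} (le : V -> V -> Prop) : Prop :=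
  forall S : V -> Prop, exists s, is_join le S s.

Definition closed {V : Type} (le : V -> V -> Prop) (tensor : V -> V -> V) : Prop :=
  exists hom : V -> V -> V,
    forall x y z, le (tensor x y) z <-> le x (hom y z).

Definition strongly_epistemically_conservative {V : Type}
    (le : V -> V -> Prop) (tensor : V -> V -> V) : Prop :=
  forall x y, le x (tensor x y).

Definition cancellative {V : Type} (le : V -> V -> Prop) (tensor : V -> V -> V) : Prop :=
  forall x y z, le (tensor x z) (tensor y z) -> le x y.

(* Main.v *)
Require Import Defs.

Theorem theorem1 (V : Type) (le : V -> V -> Prop) (tensor : V -> V -> V) (one : V)
  (HV : epistemic_calculus V le tensor one)
  (Hnt : nontrivial V)
  (Hcomp : complete le) :
  ~ (closed le tensor /\ strongly_epistemically_conservative le tensor /\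
     cancellative le tensor).
Proof.
  intros [_ [Hc Hk]].
  destruct HV as [refl trans anti assoc comm unit mono].
  destruct (Hcomp (fun _ => True)) as [T [HT _]].
  assert (E : forall x, le (tensor x T) (tensor one T) /\ le (tensor one T) (tensor x T)).
  { intro x. rewrite unit. split.
    - apply HT; exact I.
    - rewrite comm. apply Hc. }
  assert (Ex : forall x, x = one).
  { intro x. destruct (E x) as [A B]. apply anti; eapply Hk; eassumption. }
  destruct Hnt as [a [b Hab]]. apply Hab. rewrite (Ex a), (Ex b). reflexivity.
Qed.
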